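(* Let $G$ be a connected $(P_6,C_5)$-free graph, and suppose $G$ contains a chromatic cutset $S$ that is also a minimal separator. Let $(S_1,\dots,S_t)$ be a partition of $S$ into 1-chromatic sets that are pairwise complete to each other, and let $G'$ be obtained from $G$ by contracting each $S_i$ into a new vertex $s_i$ (i.e., replacing $S_i$ by a vertex $s_i$ whose neighborhood is exactly the set of vertices outside $S_i$ having a neighbor in $S_i$). Then $G'$ is $(P_6,C_5)$-free.
   Context: Graphs are finite and simple. A graph is $(P_6,C_5)$-free if it has no induced 6-vertex path and no induced 5-cycle. A set $S\subseteq V(G)$ is 1-chromatic if $S$ is an independent set and in every 4-coloring of $G$ all vertices of $S$ receive the same color. A set $S$ is a cutset if $G$ is connected and $G-S$ is disconnected. A cutset $S$ is a chromatic cutset if it admits a partition into 1-chromatic sets that are pairwise complete to each other (every vertex of one part adjacent to every vertex of another). A cutset $S$ is a minimal separator if there are two distinct connected components $K,K'$ of $G-S$ such that every vertex of $S$ has a neighbor in $K$ and a neighbor in $K'$. *)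

(* Defs.v *)
(* A graph is a symmetric irreflexive relation e on a finType,
   optionally restricted to a vertex set V. *)
From mathcomp Require Import all_boot.
Set Implicit Arguments. Unset Strict Implicit. Unset Printing Implicit Defensive.

Section Graphs.
Variable T : finType.

Definition simple_graph (e : rel T) : Prop :=
  (forall x y, e x y = e y x) /\ (forall x, ~~ e x x).

Definition has_induced_P6 (V : {set T}) (e : rel T) : Prop :=
  exists f : 'I_6 -> T, injective f /\ (forall i, f i \in V) /\
    (forall i j : 'I_6, e (f i) (f j) = ((i.+1 == j) || (j.+1 == i))).

Definition has_induced_C5 (V : {set T}) (e : rel T) : Prop :=
  exists f : 'I_5 -> T, injective f /\ (forall i, f i \in V) /\
    (forall i j : 'I_5, e (f i) (f j) =
        ((i.+1 %% 5 == j) || (j.+1 %% 5 == i))).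

Definition P6C5_free (V : {set T}) (e : rel T) : Prop :=
  ~ has_induced_P6 V e /\ ~ has_induced_C5 V e.

Definition connected_graph (e : rel T) : Prop := forall x y, connect e x y.

Definition del_rel (e : rel T) (S : {set T}) : rel T :=
  [rel x y | [&& e x y, x \notin S & y \notin S]].

Definition independent (e : rel T) (S : {set T}) : Prop :=
  forall x y, x \in S -> y \in S -> ~~ e x y.

Definition four_coloring (e : rel T) (c : T -> 'I_4) : Prop :=
  forall x y, e x y -> c x != c y.

Definition one_chromatic (e : rel T) (S : {set T}) : Prop :=
  independent e S /\
  forall c, four_coloring e c -> forall x y, x \in S -> y \in S -> c x = c y.

Definition complete_to (e : rel T) (A B : {set T}) : Prop :=
  forall x y, x \in A -> y \in B -> e x y.

Definition cutset (e : rel T) (S : {set T}) : Prop :=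
  connected_graph e /\
  exists a b, [/\ a \notin S, b \notin S & ~~ connect (del_rel e S) a b].

(* component of G - S containing a (a outside S) *)
Definition comp (e : rel T) (S : {set T}) (a : T) : {set T} :=
  [set u | connect (del_rel e S) a u].

Definition minimal_separator (e : rel T) (S : {set T}) : Prop :=
  cutset e S /\
  exists a b, [/\ a \notin S, b \notin S, ~~ connect (del_rel e S) a b &
    forall v, v \in S ->
      (exists2 u, u \in comp e S a & e v u) /\
      (exists2 u, u \in comp e S b & e v u)].

Definition is_partition (t : nat) (P : 'I_t -> {set T}) (S : {set T}) : Prop :=
  [/\ forall i, P i != set0,
      forall i j, i != j -> [disjoint P i & P j] &
      forall x, (x \in S) = [exists i, x \in P i]].

Definition chromatic_cutset (e : rel T) (S : {set T}) : Prop :=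
  cutset e S /\
  exists t (P : 'I_t -> {set T}),
    [/\ is_partition P S, forall i, one_chromatic e (P i) &
        forall i j, i != j -> complete_to e (P i) (P j)].

(* Contraction: vertices inl v (v outside S) and inr i (the new vertex s_i). *)
Definition contr_rel (e : rel T) (t : nat) (P : 'I_t -> {set T})
  : rel (T + 'I_t)%type :=
  fun x y => match x, y with
  | inl u, inl v => e u v
  | inl u, inr i => [exists w in P i, e u w]
  | inr i, inl v => [exists w in P i, e v w]
  | inr i, inr j => (i != j) && [exists u in P i, exists w in P j, e u w]
  end.

Definition contr_vertices (t : nat) (S : {set T}) : {set (T + 'I_t)%type} :=
  [set x | match x with inl v => v \notin S | inr _ => true end].

End Graphs.

(* Main.v *)
Require Import Defs.
From mathcomp Require Import all_boot.
From Stdlib Require Import Classical.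
Set Implicit Arguments. Unset Strict Implicit. Unset Printing Implicit Defensive.

Definition pat6n (i j : nat) : bool := (i.+1 == j) || (j.+1 == i).
Definition pat5n (i j : nat) : bool := (i.+1 %% 5 == j) || (j.+1 %% 5 == i).

Definition lpcn (pat : nat -> nat -> bool) (i j p1 p2 : nat) :=
  [&& pat p1 p2, pat p2 j, ~~ pat p1 j, ~~ pat i p1, ~~ pat i p2, p1 != i & p2 != i].

Definition combon n (pat : nat -> nat -> bool) : bool :=
  let I := iota 0 n in
  [&& all (fun i => all (fun j => (i != j) ==> has (fun k => pat i k != pat j k) I) I) I,
      all (fun i => all (fun j1 => all (fun j2 => all (fun j3 =>
         [&& pat i j1, pat i j2, pat i j3, j1 != j2 & j3 != j2] ==> (j3 == j1)) I) I) I) I &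
      all (fun i => all (fun j1 => all (fun j2 =>
         [&& pat i j1, pat i j2 & j1 != j2] ==>
         has (fun p1 => has (fun p2 => lpcn pat i j2 p1 p2 || lpcn pat i j1 p1 p2) I) I) I) I) I].

Lemma combo6 : combon 6 pat6n. Proof. by vm_compute. Qed.
Lemma combo5 : combon 5 pat5n. Proof. by vm_compute. Qed.

Lemma inI n (i : 'I_n) : (i : nat) \in iota 0 n.
Proof. by rewrite mem_iota ltn_ord. Qed.

Lemma ordI n k : k \in iota 0 n -> k < n.
Proof. by rewrite mem_iota. Qed.

Lemma combo_inj n pat : combon n pat ->
  forall i j : 'I_n, i != j -> exists k : 'I_n, pat i k != pat j k.
Proof.
move=> /and3P[/allP H _ _] i j nij.
have /allP /(_ _ (inI j)) := H _ (inI i).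
move=> /implyP /(_ nij) /hasP [k kI Hk].
by exists (Ordinal (ordI kI)).
Qed.

Lemma combo_deg n pat : combon n pat ->
  forall i j1 j2 j3 : 'I_n, pat i j1 -> pat i j2 -> pat i j3 -> j1 != j2 -> j3 != j2 -> j3 = j1.
Proof.
move=> /and3P[_ /allP H _] i j1 j2 j3 h1 h2 h3 n12 n32.
have /allP /(_ _ (inI j1)) /allP /(_ _ (inI j2)) /allP /(_ _ (inI j3)) := H _ (inI i).
by rewrite h1 h2 h3 n12 n32 /= => /eqP/val_inj.
Qed.

Lemma combo_lp n pat : combon n pat ->
  forall i j1 j2 : 'I_n, pat i j1 -> pat i j2 -> j1 != j2 ->
  exists p1 p2 : 'I_n, lpcn pat i j2 p1 p2 \/ lpcn pat i j1 p1 p2.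
Proof.
move=> /and3P[_ _ /allP H] i j1 j2 h1 h2 n12.
have /allP /(_ _ (inI j1)) /allP /(_ _ (inI j2)) := H _ (inI i).
rewrite h1 h2 n12 /= => /hasP [p1 p1I /hasP [p2 p2I Hp]].
exists (Ordinal (ordI p1I)), (Ordinal (ordI p2I)); exact/orP.
Qed.

Lemma pat_inj (T : finType) (e : rel T) n (pat : nat -> nat -> bool) (g : 'I_n -> T) :
  combon n pat -> (forall i j, e (g i) (g j) = pat i j) -> injective g.
Proof.
move=> C Hp i j gij; apply/eqP; apply: contraT => nij.
have [k] := combo_inj C nij.
by rewrite -!Hp gij eqxx.
Qed.

Lemma mkP6 (T : finType) (e : rel T) v0 v1 v2 v3 v4 v5 :
  simple_graph e ->
  e v0 v1 -> e v1 v2 -> e v2 v3 -> e v3 v4 -> e v4 v5 ->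
  ~~ e v0 v2 -> ~~ e v0 v3 -> ~~ e v0 v4 -> ~~ e v0 v5 ->
  ~~ e v1 v3 -> ~~ e v1 v4 -> ~~ e v1 v5 ->
  ~~ e v2 v4 -> ~~ e v2 v5 -> ~~ e v3 v5 ->
  has_induced_P6 [set: T] e.
Proof.
move=> [sy irr] e01 e12 e23 e34 e45 n02 n03 n04 n05 n13 n14 n15 n24 n25 n35.
pose f (i : 'I_6) := nth v0 [:: v0; v1; v2; v3; v4; v5] i.
have Hp : forall i j, e (f i) (f j) = pat6n i j.
  move=> [[|[|[|[|[|[|?]]]]]] Hi] [[|[|[|[|[|[|?]]]]]] Hj] //=;
  rewrite /pat6n /= ?(negbTE (irr _)) //;
  rewrite ?e01 ?e12 ?e23 ?e34 ?e45 ?(negbTE n02) ?(negbTE n03) ?(negbTE n04)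
    ?(negbTE n05) ?(negbTE n13) ?(negbTE n14) ?(negbTE n15) ?(negbTE n24)
    ?(negbTE n25) ?(negbTE n35) //;
  rewrite sy ?e01 ?e12 ?e23 ?e34 ?e45 ?(negbTE n02) ?(negbTE n03) ?(negbTE n04)
    ?(negbTE n05) ?(negbTE n13) ?(negbTE n14) ?(negbTE n15) ?(negbTE n24)
    ?(negbTE n25) ?(negbTE n35) //.
exists f; split; first exact: (pat_inj combo6 Hp).
by split=> // i; rewrite inE.
Qed.

Lemma conn_closed (T : finType) (r : rel T) (X : pred T) :
  (forall x y, X x -> r x y -> X y) -> forall x y, connect r x y -> X x -> X y.
Proof.
move=> H x y /connectP [p pth ->]; elim: p x pth => //= z p IH x /andP [rxz pth] Xx.
exact: IH _ pth (H _ _ Xx rxz).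
Qed.

Lemma del_sym (T : finType) (e : rel T) (S : {set T}) : simple_graph e -> connect_sym (del_rel e S).
Proof.
move=> [sy _]; apply: sym_connect_sym => x y; rewrite /del_rel /= sy.
by case: (e y x); rewrite //= andbC.
Qed.

Lemma comp_notS (T : finType) (e : rel T) (S : {set T}) k0 u :
  k0 \notin S -> u \in Defs.comp e S k0 -> u \notin S.
Proof.
move=> k0S; rewrite inE => c; apply: (conn_closed (X := fun x => x \notin S) _ c) => //.
by move=> x y _ /and3P[].
Qed.

Lemma comp_step (T : finType) (e : rel T) (S : {set T}) k0 u y :
  u \in Defs.comp e S k0 -> u \notin S -> y \notin S -> e u y -> y \in Defs.comp e S k0.
Proof.
rewrite !inE => c uS yS euy; apply: connect_trans c (connect1 _).
by rewrite /del_rel /= euy uS yS.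
Qed.

Lemma ts (T : finType) (e : rel T) (S : {set T}) k0 w1 w2 :
  simple_graph e -> k0 \notin S -> ~~ e w1 w2 ->
  (exists2 u, u \in Defs.comp e S k0 & e w1 u) -> (exists2 u, u \in Defs.comp e S k0 & e w2 u) ->
  exists q r, [/\ q \in Defs.comp e S k0, e w2 q, e q r, ~~ e w2 r &
                  (r \in Defs.comp e S k0) || (r == w1)].
Proof.
move=> sg k0S n12 [u1 u1K e1] [u0 u0K e0].
apply: NNPP => Hn.
have cl : forall x y, (x \in Defs.comp e S k0) && e w2 x -> del_rel e S x y ->
             (y \in Defs.comp e S k0) && e w2 y.
  move=> x y /andP[xK ex] /and3P[exy xS yS].
  have yK := comp_step xK xS yS exy.
  rewrite yK /=; apply: contraT => ny; case: Hn; exists x, y; split=> //.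
  by rewrite yK.
have c01 : connect (del_rel e S) u0 u1.
  move: u0K u1K; rewrite !inE => c0 c1.
  by apply: connect_trans c1; rewrite (del_sym _ sg).
have /andP[_ e21] := conn_closed cl c01 (introT andP (conj u0K e0)).
apply: Hn; exists u1, w1; split=> //; last by rewrite eqxx orbT.
by case: sg => sy _; rewrite sy.
by case: sg => sy _; rewrite sy.
Qed.

Lemma longpath (T : finType) (e : rel T) (S : {set T}) (w1 w2 l1 l2 b : T) :
  simple_graph e -> minimal_separator e S ->
  w1 \in S -> w2 \in S -> ~~ e w1 w2 ->
  l1 \notin S -> l2 \notin S -> b \notin S ->
  e l1 l2 -> e l2 b -> ~~ e l1 b -> e w2 b -> ~~ e w1 b ->
  ~~ e w1 l1 -> ~~ e w1 l2 -> ~~ e w2 l1 -> ~~ e w2 l2 ->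
  has_induced_P6 [set: T] e.
Proof.
move=> sg [_ [a0 [b0 [a0S b0S nab Hv]]]] w1S w2S n12 l1S l2S bS
  e12 e2b n1b ew2b nw1b n11 n12' n21 n22.
have sy := sg.1.
have [k0 [k0S nk0b Hk]] : exists k0, [/\ k0 \notin S,
    ~~ connect (del_rel e S) k0 b &
    forall v, v \in S -> exists2 u, u \in Defs.comp e S k0 & e v u].
  case: (boolP (connect (del_rel e S) a0 b)) => cab.
    exists b0; split=> //; last by move=> v /Hv [].
    apply: contra nab => cb0b; apply: connect_trans cab _.
    by rewrite (del_sym _ sg).
  by exists a0; split=> // v /Hv [].
have [q [r [qK ew2q eqr nw2r rK]]] := ts sg k0S n12 (Hk _ w1S) (Hk _ w2S).
have bK : b \notin Defs.comp e S k0 by rewrite inE.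
have l2K : l2 \notin Defs.comp e S k0.
  by apply: contra bK => l2K; apply: comp_step l2K l2S bS e2b.
have l1K : l1 \notin Defs.comp e S k0.
  by apply: contra l2K => l1K; apply: comp_step l1K l1S l2S e12.
have nK : forall x y, x \in Defs.comp e S k0 -> y \notin S -> y \notin Defs.comp e S k0 -> ~~ e x y.
  move=> x y xK yS yK; have xS := comp_notS k0S xK.
  by apply: contra yK => exy; apply: comp_step xK xS yS exy.
have qS := comp_notS k0S qK.
have nr : forall y, y \notin S -> y \notin Defs.comp e S k0 -> ~~ e y w1 -> ~~ e y r.
  move=> y yS yK nyw; case/orP: rK => [rK|/eqP->] //.
  by rewrite sy; apply: nK.
apply: (mkP6 sg e12 e2b (_ : e b w2) ew2q eqr) => //.
- by rewrite sy.
- by rewrite sy.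
- by rewrite sy; apply: nK.
- by apply: nr => //; rewrite sy.
- by rewrite sy.
- by rewrite sy; apply: nK.
- by apply: nr => //; rewrite sy.
- by rewrite sy; apply: nK.
- by apply: nr => //; rewrite sy.
Qed.

Definition adjl (T : finType) (e : rel T) t (w : T) (y : (T + 'I_t)%type) : bool :=
  match y with inl v => e w v | inr _ => true end.

Lemma transfer (T : finType) (e : rel T) (S : {set T}) t (P : 'I_t -> {set T}) n
  (pat : 'I_n -> 'I_n -> bool) (f : 'I_n -> (T + 'I_t)%type) (x0 : T) :
  simple_graph e -> is_partition P S ->
  (forall i j, i != j -> complete_to e (P i) (P j)) ->
  injective f -> (forall i, f i \in contr_vertices t S) ->
  (forall i j, contr_rel e P (f i) (f j) = pat i j) ->
  (forall i k, f i = inr k -> exists2 w, w \in P k & forall j, pat i j -> adjl e w (f j)) ->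
  exists g : 'I_n -> T, injective g /\ forall i j, e (g i) (g j) = pat i j.
Proof.
move=> [sy irr] [ne disj cov] compl finj fV fp good.
pose g i := match f i with inl v => v | inr k =>
   odflt x0 [pick w in P k | [forall j, pat i j ==> adjl e w (f j)]] end.
have gl : forall i v, f i = inl v -> g i = v by move=> i v fi; rewrite /g fi.
have gr : forall i k, f i = inr k -> g i \in P k /\ forall j, pat i j -> adjl e (g i) (f j).
  move=> i k fi; rewrite /g fi; case: pickP => [w /andP[wP /forallP H]|H0].
    by split=> // j; apply/implyP/H.
  have [w wP Hw] := good i k fi.
  have := H0 w; rewrite wP /=; move/negbT/forallPn => [j]; rewrite negb_imply => /andP[pj nj].
  by rewrite Hw in nj.
have PS : forall k w, w \in P k -> w \in S.
  by move=> k w wP; rewrite cov; apply/existsP; exists k.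
have vS : forall i v, f i = inl v -> v \notin S.
  by move=> i v fi; have := fV i; rewrite fi inE.
exists g; split.
  move=> i j; case fi: (f i) => [u|k]; case fj: (f j) => [v|k'].
  - by rewrite (gl _ _ fi) (gl _ _ fj) => uv; apply: finj; rewrite fi fj uv.
  - have [wP _] := gr _ _ fj; rewrite (gl _ _ fi) => uw.
    by move: (vS _ _ fi); rewrite uw (PS _ _ wP).
  - have [wP _] := gr _ _ fi; rewrite (gl _ _ fj) => uw.
    by move: (vS _ _ fj); rewrite -uw (PS _ _ wP).
  - have [wP _] := gr _ _ fi; have [wP' _] := gr _ _ fj => gij.
    case: (eqVneq k k') => [ekk|nkk]; first by apply: finj; rewrite fi fj ekk.
    by move: (disjointFr (disj _ _ nkk) wP); rewrite gij wP'.
move=> i j; case fi: (f i) => [u|k]; case fj: (f j) => [v|k'].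
- by rewrite (gl _ _ fi) (gl _ _ fj) -fp fi fj.
- have [wP Hw] := gr _ _ fj; have E1 := fp i j; have E2 := fp j i.
  rewrite fi fj /= in E1 E2; rewrite (gl _ _ fi) -E1.
  apply/idP/idP => [h|/existsP [w' /andP[w'P h]]].
    by apply/existsP; exists (g j); rewrite wP h.
  by have := Hw i; rewrite -E2 fi /= sy; apply; apply/existsP; exists w'; rewrite w'P h.
- have [wP Hw] := gr _ _ fi; have E1 := fp i j.
  rewrite fi fj /= in E1; rewrite (gl _ _ fj) -E1.
  apply/idP/idP => [h|/existsP [w' /andP[w'P h]]].
    by apply/existsP; exists (g i); rewrite wP sy h.
  by have := Hw j; rewrite -E1 fj /=; apply; apply/existsP; exists w'; rewrite w'P h.
- have [wP _] := gr _ _ fi; have [wP' _] := gr _ _ fj.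
  case: (eqVneq k k') => [ekk|nkk].
    have eij : i = j by apply: finj; rewrite fi fj ekk.
    subst j; rewrite -fp fi /= eqxx /=; exact/negbTE/irr.
  rewrite -fp fi fj /= nkk (compl _ _ nkk _ _ wP wP') /=.
  by apply/esym/existsP; exists (g i); rewrite wP; apply/existsP; exists (g j); rewrite wP' (compl _ _ nkk _ _ wP wP').
Qed.

Lemma main_gen (T : finType) (e : rel T) (S : {set T}) t (P : 'I_t -> {set T}) n
  (patn : nat -> nat -> bool) (f : 'I_n -> (T + 'I_t)%type) (x0 : T) :
  combon n patn ->
  simple_graph e -> minimal_separator e S -> is_partition P S ->
  (forall i, independent e (P i)) ->
  (forall i j, i != j -> complete_to e (P i) (P j)) ->
  injective f -> (forall i, f i \in contr_vertices t S) ->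
  (forall i j : 'I_n, contr_rel e P (f i) (f j) = patn i j) ->
  (exists g : 'I_n -> T, injective g /\ forall i j : 'I_n, e (g i) (g j) = patn i j)
  \/ has_induced_P6 [set: T] e.
Proof.
move=> C sg ms part indep compl finj fV fp.
have [sy irr] := sg.
have [ne disj cov] := part.
case: (classic (forall i k, f i = inr k ->
   exists2 w, w \in P k & forall j : 'I_n, patn i j -> adjl e w (f j))) => [good|bad].
  by left; apply: (transfer (pat := fun i j : 'I_n => patn i j) x0 sg part compl finj fV fp good).
right.
have [i [k [fi Hbad]]] : exists i k, f i = inr k /\
    forall w, w \in P k -> exists j : 'I_n, patn i j /\ ~~ adjl e w (f j).
  apply: NNPP => Hn; apply: bad => i k fi; apply: NNPP => Hw; apply: Hn; exists i, k.
  split=> // w wP; apply: NNPP => Hj; apply: Hw; exists w => // j pij.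
  apply: NNPP => h; apply: Hj; exists j; split=> //; exact/negP.
have PS : forall k w, w \in P k -> w \in S.
  by move=> k' w wP; rewrite cov; apply/existsP; exists k'.
have vS : forall j v, f j = inl v -> v \notin S.
  by move=> j v fj; have := fV j; rewrite fj inE.
have F1 : forall p, p != i -> ~~ patn i p ->
    exists v, f p = inl v /\ forall w, w \in P k -> ~~ e w v.
  move=> p npi np; case fpv: (f p) => [v|k'].
    exists v; split=> // w wP; apply: contra np => ewv.
    by rewrite -fp fi fpv /=; apply/existsP; exists w; rewrite wP sy.
  exfalso; case: (eqVneq k k') => [ekk|nkk].
    by move: npi; rewrite (finj i p) ?eqxx // fi fpv ekk.
  move: np; rewrite -fp fi fpv /= nkk /=.
  have /set0Pn [u uP] := ne k; have /set0Pn [u' uP'] := ne k'.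
  move/negP; apply; apply/existsP; exists u; rewrite uP; apply/existsP; exists u'.
  by rewrite uP' (compl _ _ nkk _ _ uP uP').
have F2 : forall j v, f j = inl v -> patn i j -> exists2 w, w \in P k & e w v.
  move=> j v fj; rewrite -fp fi fj /= => /existsP [w /andP[wP ew]].
  by exists w; rewrite // sy.
have Hbad' : forall w, w \in P k -> exists (j : 'I_n) v, [/\ patn i j, f j = inl v & ~~ e w v].
  move=> w wP; have [j [pj]] := Hbad w wP; case fj: (f j) => [v|//] nj.
  by exists j, v.
have /set0Pn [w0 w0P] := ne k.
have [j1 [a [p1 fj1 _]]] := Hbad' w0 w0P.
have [w1 w1P ew1a] := F2 _ _ fj1 p1.
have [j2 [b [p2 fj2 nw1b]]] := Hbad' w1 w1P.
have n12 : j1 != j2.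
  by apply: contraNneq nw1b => ej; move: fj2; rewrite -ej fj1 => -[<-].
have [w2 w2P ew2b] := F2 _ _ fj2 p2.
have [j3 [c [p3 fj3 nw2c]]] := Hbad' w2 w2P.
have n32 : j3 != j2.
  by apply: contraNneq nw2c => ej; move: fj3; rewrite ej fj2 => -[<-].
have e31 := combo_deg C p1 p2 p3 n12 n32.
move: fj3; rewrite e31 fj1 => -[ec]; subst c.
have [q1 [q2 H]] := combo_lp C p1 p2 n12.
have Hl : forall j bb, f j = inl bb -> lpcn patn i j q1 q2 ->
    exists l1 l2, [/\ l1 \notin S, l2 \notin S, e l1 l2, e l2 bb & ~~ e l1 bb] /\
      forall w, w \in P k -> ~~ e w l1 /\ ~~ e w l2.
  move=> j bb fj /and5P [a1 a2 a3 a4 /and3P [a5 a6 a7]].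
  have [v1 [f1 N1]] := F1 _ a6 a4; have [v2 [f2 N2]] := F1 _ a7 a5.
  exists v1, v2; split; last by move=> w wP; rewrite N1 ?N2.
  split; first exact: vS f1; first exact: vS f2.
  - by have := fp q1 q2; rewrite f1 f2 /= => ->.
  - by have := fp q2 j; rewrite f2 fj /= => ->.
  - by have := fp q1 j; rewrite f1 fj /= => ->.
case: H => H.
  have [l1 [l2 [[l1S l2S el el2 nl1] N]]] := Hl _ _ fj2 H.
  have [N11 N12] := N _ w1P; have [N21 N22] := N _ w2P.
  apply: (longpath sg ms (PS _ _ w1P) (PS _ _ w2P) (indep k _ _ w1P w2P)
    l1S l2S (vS _ _ fj2) el el2 nl1 ew2b nw1b) => //.
have [l1 [l2 [[l1S l2S el el2 nl1] N]]] := Hl _ _ fj1 H.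
have [N11 N12] := N _ w1P; have [N21 N22] := N _ w2P.
apply: (longpath sg ms (PS _ _ w2P) (PS _ _ w1P) (indep k _ _ w2P w1P)
  l1S l2S (vS _ _ fj1) el el2 nl1 ew1a nw2c) => //.
Qed.

Theorem lemma3 (T : finType) (e : rel T) (S : {set T})
  (t : nat) (P : 'I_t -> {set T}) :
  simple_graph e ->
  connected_graph e ->
  P6C5_free [set: T] e ->
  chromatic_cutset e S ->
  minimal_separator e S ->
  is_partition P S ->
  (forall i, one_chromatic e (P i)) ->
  (forall i j, i != j -> complete_to e (P i) (P j)) ->
  P6C5_free (contr_vertices t S) (contr_rel e P).
Proof.
move=> sg conn free cc ms part onec compl.
have indep : forall i, independent e (P i) by move=> i; case: (onec i).
have [x0 _] : exists x0 : T, True by case: ms => _ [a0 _]; exists a0.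
case: free => nP6 nC5.
split.
- move=> [f [finj [fV fp]]].
  case: (main_gen (patn := pat6n) x0 combo6 sg ms part indep compl finj fV fp)
    => [[g [ginj gp]]|//].
  by apply: nP6; exists g; split=> //; split=> // i; rewrite inE.
- move=> [f [finj [fV fp]]].
  case: (main_gen (patn := pat5n) x0 combo5 sg ms part indep compl finj fV fp)
    => [[g [ginj gp]]|//].
  by apply: nC5; exists g; split=> //; split=> // i; rewrite inE.
Qed.
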